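(* In the one-path setting with groups $\mathcal{G}$ and junction trees $H_g$ as below, every vertex of $V(E^* )\setminus V(P)$ and every edge of $E^*\setminus E(P)$ belongs to at most $10\lfloor\log_2|P|\rfloor+12$ of the graphs $H_g$, $g\in\mathcal{G}$.
   Context: One-path setting: $G$ is a digraph, $D=\{(s_i,t_i)\}_{i\in[k]}$, $E^*\subseteq E(G)$, $P=v_0v_1\cdots v_{|P|}$ a dipath with edges in $E^*$, $|P|\ge1$ its number of edges; reachability w.r.t. $E^*$; every pair has an $s_i$-$t_i$ dipath in $E^*$ meeting $P$. $u\le_P w$ means $u$ appears no later than $w$ on $P$; $P[u,w]$ is the subpath from $u$ to $w$. $a_i$ is the $\le_P$-first vertex of $P$ reachable from $s_i$, $b_i$ the $\le_P$-last vertex of $P$ that can reach $t_i$; $I_i=P[a_i,b_i]$ with $|I_i|$ its number of edges. For each $i$, $P_{s_i}$ is a fixed dipath in $E^*$ from $s_i$ to $a_i$ and $P_{t_i}$ a fixed dipath in $E^*$ from $b_i$ to $t_i$. Groups: $D_0=\{i:a_i=b_i\}$; for $j\in\{1,\dots,\lfloor\log_2|P|\rfloor+1\}$, $D_j=\{i:2^{j-1}\le|I_i|<2^j\}$; for a vertex $v$ of $P$, $D_j^v=\{i\in D_j: v\in I_i\}$; $\mathcal{G}=\{D_0^v: v=a_i=b_i\text{ for some }i\in D_0\}\cup\bigcup_{j\ge1}\{D_j^{v_\ell}: 0\le\ell\le|P|,\ \ell\text{ a multiple of }2^{j-1}\}$. For a nonempty $g\in\mathcal{G}$, $H_g=P[a_{\mathrm{start}},b_{\mathrm{end}}]\cup\bigcup_{i\in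 g}(P_{s_i}\cup P_{t_i})$, where $a_{\mathrm{start}}$ is the $\le_P$-minimum of $\{a_i:i\in g\}$ and $b_{\mathrm{end}}$ the $\le_P$-maximum of $\{b_i:i\in g\}$. *)

(* Defs.v *)
From mathcomp Require Import all_boot.
(* Note: 'ia'/'ib' are positions in p; j ranges over 1..floor(log2|P|)+1, l over 0..|P| *)
Set Implicit Arguments. Unset Strict Implicit. Unset Printing Implicit Defensive.

(* A dipath is given by its (nonempty, duplicate-free) vertex sequence.
   P is the vertex sequence p = [:: v_0; ...; v_|P|], so |P| = (size p).-1,
   and vertices of P are identified with their positions (indices) in p. *)

Section OnePath.
Context {V : finType}.

Definition erel (E : {set V * V}) : rel V := fun x y => (x, y) \in E.

Definition reach (E : {set V * V}) (x y : V) : bool := connect (erel E) x y.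

Definition pedges (q : seq V) : seq (V * V) := zip q (behead q).

Definition dipath_seq (E : {set V * V}) (q : seq V) : bool :=
  match q with [::] => false | z :: q' => path (erel E) z q' && uniq q end.

Definition is_dipath (E : {set V * V}) (q : seq V) (x y : V) : bool :=
  [&& dipath_seq E q, head x q == x & last x q == y].

Definition in_VE (E : {set V * V}) (v : V) : bool :=
  [exists u, ((v, u) \in E) || ((u, v) \in E)].

Definition plen (p : seq V) : nat := (size p).-1.

Definition ia (E : {set V * V}) (p : seq V) (s : V) : nat := find (reach E s) p.

(* index in p of b_i : the <=_P-last vertex of P that can reach t *)
Definition ib (E : {set V * V}) (p : seq V) (t : V) : nat :=
  (size p).-1 - find (fun v => reach E v t) (rev p).

Variables (E : {set V * V}) (p : seq V) (k : nat) (s t : 'I_k -> V)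
          (Ps Pt : 'I_k -> seq V).

Let a i := ia E p (s i).
Let b i := ib E p (t i).

(* i \in D_j ; |I_i| = b i - a i *)
Definition inD (j : nat) (i : 'I_k) : bool :=
  if j == 0 then a i == b i else (2 ^ j.-1 <= b i - a i < 2 ^ j).

Definition Dgrp (j l : nat) : {set 'I_k} :=
  [set i | inD j i && (a i <= l <= b i)].

Definition groups : {set {set 'I_k}} :=
  [set Dgrp 0 (a i) | i in [pred i | inD 0 i]] :|:
  [set Dgrp (nat_of_ord jl.1) (nat_of_ord jl.2)
     | jl in [pred jl : 'I_(trunc_log 2 (plen p)).+2 * 'I_(plen p).+1
              | (0 < jl.1) && (2 ^ (nat_of_ord jl.1).-1 %| jl.2)]].

Definition astart (g : {set 'I_k}) : nat := \big[minn/plen p]_(i in g) a i.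
Definition bend (g : {set 'I_k}) : nat := \max_(i in g) b i.

Definition inH_v (g : {set 'I_k}) (x : V) : bool :=
  [exists l : 'I_(size p), (astart g <= l <= bend g) && (nth x p l == x)]
  || [exists i in g, (x \in Ps i) || (x \in Pt i)].

Definition inH_e (g : {set 'I_k}) (e : V * V) : bool :=
  [exists l : 'I_(size p),
      [&& astart g <= l, l < bend g & e == (nth e.1 p l, nth e.1 p l.+1)]]
  || [exists i in g, (e \in pedges (Ps i)) || (e \in pedges (Pt i))].

End OnePath.

(* Main.v *)
Require Import Defs.
From mathcomp Require Import all_boot.
From mathcomp Require Import zify.
Set Implicit Arguments. Unset Strict Implicit.

Section Helpers.
Variable V : finType.
Implicit Types (E : {set V * V}) (p q : seq V).

Lemma dipath_reach E q u w x :
  is_dipath E q u w -> x \in q -> reach E u x && reach E x w.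
Proof.
case: q => [|z q] //= /and3P [/andP [Hp _] /eqP Hz /eqP Hl] Hx.
move: Hz Hl => /= Hz Hl; subst z.
apply/andP; split; first exact: (path_connect Hp).
case/splitPl: Hx Hp Hl => p1 p2 Hlast.
rewrite cat_path last_cat => /andP [_ H2] <-.
rewrite /reach -Hlast; apply: (path_connect H2); exact: mem_last.
Qed.

Lemma find_le_nth (T : Type) (a : pred T) (s : seq T) x0 i :
  i < size s -> a (nth x0 s i) -> find a s <= i.
Proof.
move=> Hi Ha; rewrite leqNgt; apply/negP => H.
by have := before_find x0 H; rewrite Ha.
Qed.

Lemma ia_eq E p q s x :
  is_dipath E q s (nth s p (ia E p s)) -> x \in q -> ia E p x = ia E p s.
Proof.
move=> Hq Hx; have /andP [H1 H2] := dipath_reach Hq Hx.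
apply/eqP; rewrite eqn_leq; apply/andP; split.
  case: (ltnP (ia E p s) (size p)) => Hs.
    by apply: (find_le_nth (x0 := s)).
  by apply: leq_trans (find_size _ _) Hs.
apply: sub_find => v Hv; exact: connect_trans H1 Hv.
Qed.

Lemma ib_eq E p q t x :
  is_dipath E q (nth t p (ib E p t)) t -> x \in q -> ib E p x = ib E p t.
Proof.
move=> Hq Hx; have /andP [H1 H2] := dipath_reach Hq Hx.
rewrite /ib; congr (_ - _); apply/eqP; rewrite eqn_leq; apply/andP; split.
  move: H1; rewrite /ib.
  set f := find _ (rev p) => H1.
  case: (ltnP f (size (rev p))) => Hs.
    apply: (find_le_nth (x0 := t)) => //=.
    rewrite nth_rev; last by rewrite -size_rev.
    rewrite size_rev in Hs *.
    by have -> : size p - f.+1 = (size p).-1 - f by lia.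
  by apply: leq_trans (find_size _ _) Hs.
apply: sub_find => v Hv; exact: connect_trans Hv H2.
Qed.

Lemma pedges_nth p d l : l.+1 < size p -> (nth d p l, nth d p l.+1) \in pedges p.
Proof.
elim: p l => [|a [|b r] IH] [|l] //=.
  by rewrite /pedges /= inE eqxx.
move=> Hl; rewrite /pedges /= inE; apply/orP; right.
exact: (IH l Hl).
Qed.

Lemma pedges_fst p e : e \in pedges p -> e.1 \in p.
Proof.
rewrite /pedges; case: p => [|a r] //=.
elim: r a => [|b r IH] a //=.
rewrite inE => /orP [/eqP -> | H]; first by rewrite inE eqxx.
by rewrite inE (IH b H) orbT.
Qed.

End Helpers.

Lemma key (V : finType) (E : {set V * V}) (p : seq V) k (s t : 'I_k -> V)
  (Ps Pt : 'I_k -> seq V) x :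
  (forall i, is_dipath E (Ps i) (s i) (nth (s i) p (ia E p (s i)))) ->
  (forall i, is_dipath E (Pt i) (nth (t i) p (ib E p (t i))) (t i)) ->
  #|[set g in groups E p s t | [exists i in g, (x \in Ps i) || (x \in Pt i)]]|
    <= 6 * (trunc_log 2 (plen p)).+2.
Proof.
move=> HPs HPt.
set L := trunc_log 2 (plen p).
set al := ia E p x; set be := ib E p x.
pose f := fun jc : 'I_L.+2 * 'I_6 => let j := nat_of_ord jc.1 in
  let c := nat_of_ord jc.2 in let d := 2 ^ j.-1 in
  Dgrp E p s t j (if c < 3 then (al %/ d + c) * d else (be %/ d - (c - 3)) * d).
apply: (@leq_trans #|[set f jc | jc in setT]|); last first.
  by apply: leq_trans (leq_imset_card _ _) _; rewrite cardsT card_prod !card_ord mulnC.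
apply: subset_leq_card; apply/subsetP => g.
rewrite inE => /andP [Hg /existsP [i /andP [ig Hx]]].
have Hcase : (ia E p (s i) = al) \/ (ib E p (t i) = be).
  case/orP: Hx => Hx; [left | right]; rewrite /al /be.
   - by rewrite (ia_eq (HPs i) Hx).
   - by rewrite (ib_eq (HPt i) Hx).
apply/imsetP.
case/setUP: Hg => /imsetP [].
- move=> i0 Hi0 Hg; subst g.
  move: ig; rewrite inE /inD /= => /andP [/eqP Hab /andP [H1 H2]].
  have Hai : ia E p (s i0) = ia E p (s i) by lia.
  case: Hcase => Hc.
  + exists (ord0, Ordinal (isT : 0 < 6)) => //.
    by rewrite /f /= expn0 divn1 muln1 addn0 Hai Hc.
  + exists (ord0, Ordinal (isT : 3 < 6)) => //.
    by rewrite /f /= expn0 divn1 muln1 subn0 Hai Hab Hc.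
- move=> [j l]; rewrite inE /= => /andP [Hj Hdl] Hg; subst g.
  move: ig; rewrite inE /inD /=.
  have -> : (nat_of_ord j == 0) = false by lia.
  move=> /andP [/andP [Hlo Hhi] /andP [H1 H2]].
  set d := 2 ^ (nat_of_ord j).-1 in Hlo Hhi Hdl *.
  have d0 : 0 < d by rewrite expn_gt0.
  have Hj2 : 2 ^ j = d * 2 by rewrite /d -expnSr prednK.
  rewrite Hj2 in Hhi.
  have Hl : nat_of_ord l = l %/ d * d by rewrite divnK.
  move: Hl; set q := l %/ d => Hl.
  case: Hcase => Hc.
  + have A1 : al %/ d <= q by rewrite /q; apply: leq_div2r; lia.
    have A2 : q <= al %/ d + 2.
      rewrite /q; apply: leq_trans (leq_div2r d (_ : l <= 2 * d + al)) _; first lia.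
      by rewrite divnMDl // addnC.
    have Hc3 : q - al %/ d < 6 by lia.
    exists (j, Ordinal Hc3) => //.
    rewrite /f /=.
    have -> : (q - al %/ d < 3) = true by lia.
    have -> : al %/ d + (q - al %/ d) = q by lia.
    by rewrite -Hl.
  + have B1 : q <= be %/ d by rewrite /q; apply: leq_div2r; lia.
    have B2 : be %/ d < q + 2.
      rewrite ltn_divLR // mulnDl -Hl; lia.
    have Hc3 : 3 + (be %/ d - q) < 6 by lia.
    exists (j, Ordinal Hc3) => //.
    rewrite /f /=.
    rewrite -/d.
    have -> : be %/ d - (3 + (be %/ d - q) - 3) = q by lia.
    by rewrite -Hl.
Qed.

Theorem mainTheorem13 (V : finType) (EG Estar : {set V * V}) (p : seq V)
    (k : nat) (s t : 'I_k -> V) (Ps Pt : 'I_k -> seq V) :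
  Estar \subset EG ->
  dipath_seq Estar p ->
  1 <= plen p ->
  (forall i, exists q, is_dipath Estar q (s i) (t i) && has (fun v => v \in p) q) ->
  (forall i, is_dipath Estar (Ps i) (s i) (nth (s i) p (ia Estar p (s i)))) ->
  (forall i, is_dipath Estar (Pt i) (nth (t i) p (ib Estar p (t i))) (t i)) ->
  (forall x : V, in_VE Estar x -> x \notin p ->
     #|[set g in groups Estar p s t | (g != set0) && inH_v Estar p s t Ps Pt g x]|
       <= 10 * trunc_log 2 (plen p) + 12)
  /\
  (forall e : V * V, e \in Estar -> e \notin pedges p ->
     #|[set g in groups Estar p s t | (g != set0) && inH_e Estar p s t Ps Pt g e]|
       <= 10 * trunc_log 2 (plen p) + 12).
Proof.
move=> _ _ _ _ HPs HPt.
have K := fun x => key x HPs HPt.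
have Hb : 6 * (trunc_log 2 (plen p)).+2 <= 10 * trunc_log 2 (plen p) + 12 by lia.
split.
- move=> x _ Hxp; apply: leq_trans (leq_trans (K x) Hb).
  apply: subset_leq_card; apply/subsetP => g.
  rewrite !inE => /andP [-> /andP [_ /orP [/existsP [l /andP [_ /eqP Hl]] | H]]] //=.
  by move: Hxp; rewrite -Hl mem_nth.
- move=> e _ Hep; apply: leq_trans (leq_trans (K e.1) Hb).
  apply: subset_leq_card; apply/subsetP => g.
  rewrite !inE => /andP [-> /andP [_ /orP [/existsP [l /and3P [_ Hlb /eqP He]] | /existsP [i /andP [ig H]]]]] //=.
    have Hbnd : bend Estar p t g <= (size p).-1.
      by apply/bigmax_leqP => i _; rewrite /ib leq_subr.
    have Hl1 : l.+1 < size p by lia.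
    by move: Hep; rewrite He pedges_nth.
  apply/existsP; exists i; rewrite ig /=.
  by case/orP: H => /pedges_fst ->; rewrite ?orbT.
Qed.
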